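(* Let $k>\ell\ge1$, $m\ge1$ and $w=a^kba^\ell b^m$. For every $u\in L^{\epsilon}_{\vdash_{\{w\}}}$ and every nonempty prefix $p$ of $u$, $\nu(p)\ge \frac{k+\ell}{m+1}$, where $\nu(p)=|p|_a/|p|_b$ (with $\nu(p)=\infty$ if $|p|_b=0$).
   Context: $|u|_c$ is the number of occurrences of letter $c$ in $u$. For words $u,v$, the shuffle $u \sqcup\!\sqcup v$ is the set of all words $u_1v_1\cdots u_kv_k$ with $k\ge 1$, $u=u_1\cdots u_k$, $v=v_1\cdots v_k$ (pieces possibly empty). For a finite set $I$ of words, $v \vdash_I w$ means $w \in v \sqcup\!\sqcup u$ for some $u\in I$; $\vdash_I^*$ is its reflexive-transitive closure and $L^{\epsilon}_{\vdash_I}=\{w : \epsilon \vdash_I^* w\}$. *)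

(* Defs.v *)
From mathcomp Require Import all_boot all_order all_algebra.
From Stdlib Require Import Relation_Operators.
Set Implicit Arguments. Unset Strict Implicit. Unset Printing Implicit Defensive.

(* Alphabet {a, b}, encoded as bool: a = true, b = false. *)
Definition word := seq bool.
Definition la : bool := true.
Definition lb : bool := false.

Definition occ (c : bool) (u : word) : nat := count_mem c u.

Definition pw (c : bool) (n : nat) : word := nseq n c.

Definition shuffle (u v w : word) : Prop :=
  exists (us vs : seq word),
    [/\ size us = size vs, 0 < size us, flatten us = u, flatten vs = v &
        w = flatten [seq x.1 ++ x.2 | x <- zip us vs]].

Definition derives (I : seq word) (v w : word) : Prop :=
  exists2 u, u \in I & shuffle v u w.

Definition Leps (I : seq word) (w : word) : Prop :=
  clos_refl_trans word (derives I) [::] w.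

(* ν(p) >= r, where ν(p) = |p|_a / |p|_b and ν(p) = ∞ when |p|_b = 0 *)
Definition nu_ge (p : word) (r : rat) : Prop :=
  occ lb p = 0%N \/ (r <= (occ la p)%:R / (occ lb p)%:R)%R.

(* Main.v *)
Require Import Defs.
From mathcomp Require Import all_boot all_order all_algebra.
From Stdlib Require Import Relation_Operators Operators_Properties.
From mathcomp Require Import zify.
Import GRing.Theory Num.Theory.

Lemma split_take (us vs : seq word) n : size us = size vs ->
  exists i j, forall c, occ c (take n (flatten [seq x.1 ++ x.2 | x <- zip us vs]))
     = occ c (take i (flatten us)) + occ c (take j (flatten vs)).
Proof.
elim: us vs n => [|u us IH] [|v vs] n //=.
case=> /IH H.
rewrite -catA !take_cat.
case: ltnP => Hn.
  exists n, 0 => c; rewrite take0 take_cat Hn /occ addn0 //.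
case: ltnP => Hn2.
  exists (size u), (n - size u) => c.
  rewrite !take_cat ltnn subnn take0 cats0 Hn2 /occ !count_cat //.
have [i [j Hij]] := H (n - size u - size v).
exists (size u + i), (size v + j) => c.
rewrite !take_cat.
have -> : (size u + i < size u) = false by lia.
have -> : (size v + j < size v) = false by lia.
rewrite !addKn /occ !count_cat -!/(occ _ _) Hij.
lia.
Qed.

Definition Q (k l m : nat) (s : word) := (k + l) * occ lb s <= m.+1 * occ la s.

Lemma Q_add k l m s1 s2 s : (forall c, occ c s = occ c s1 + occ c s2) ->
  Q k l m s1 -> Q k l m s2 -> Q k l m s.
Proof. rewrite /Q => H; rewrite !H !mulnDr; lia. Qed.

Lemma occ_nseq c d n : occ c (nseq n d) = if d == c then n else 0.
Proof. by rewrite /occ count_nseq /=; case: (d == c); rewrite ?mul1n ?mul0n. Qed.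

Lemma Q_w k l m : l < k -> 1 <= l -> 1 <= m -> forall n,
  Q k l m (take n (pw la k ++ [:: lb] ++ pw la l ++ pw lb m)).
Proof.
move=> Hlk Hl Hm n; rewrite /Q /pw take_cat size_nseq.
case: ltnP => Hn.
  rewrite take_nseq; last exact: ltnW.
  by rewrite !occ_nseq /= muln0.
rewrite /= ; case E: (n - k) => [|n1].
  rewrite take0 cats0 !occ_nseq /= muln0 //.
rewrite /= take_cat size_nseq.
case: ltnP => Hn1.
  rewrite take_nseq; last exact: ltnW.
  rewrite /occ !count_cat /= -!/(occ _ _) !occ_nseq /=.
  nia.
rewrite /occ !count_cat /= -!/(occ _ _) !occ_nseq /=.
have [j [Hj ->]] : exists j, j <= m /\ take (n1 - l) (nseq m lb) = nseq j lb.
  case: (leqP (n1 - l) m) => H.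
    by exists (n1 - l); rewrite take_nseq.
  by exists m; rewrite take_oversize ?size_nseq // ltnW.
rewrite /occ !count_cat -!/(occ _ _) !occ_nseq /=. nia.
Qed.

Theorem lemma5 (k l m : nat) :
  (l < k)%N -> (1 <= l)%N -> (1 <= m)%N ->
  let w := pw la k ++ [:: lb] ++ pw la l ++ pw lb m in
  forall u : word, Leps [:: w] u ->
  forall p : word, p != [::] -> prefix p u ->
  nu_ge p ((k + l)%:R / (m.+1)%:R : rat).
Proof.
move=> Hlk Hl Hm w u Hu0 p _ Hp.
have Hu := clos_rt_rtn1 _ _ _ _ Hu0; clear Hu0.
have HQ : forall n, Q k l m (take n u).
  elim: Hu => [|y z [x Hx [us [vs [Hs _ Hv Hx' ->]]]] _ IH] n.
    by rewrite /Q; case: n => [|n]; rewrite /occ /= !muln0.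
  move: Hx; rewrite inE => /eqP Hx; subst x.
  have [i [j Hij]] := @split_take us vs n Hs.
  apply: (@Q_add k l m _ _ _ Hij); first by rewrite Hv.
  by rewrite Hx; apply: Q_w.
move: Hp; rewrite prefixE => /eqP Hp.
have := HQ (size p); rewrite Hp /Q => H.
rewrite /nu_ge; case E: (occ lb p) => [|b]; [by left|right].
rewrite -E.
have Hb : (0 < (occ lb p)%:R :> rat)%R by rewrite Num.Theory.ltr0n E.
rewrite Num.Theory.ler_pdivlMr // mulrAC Num.Theory.ler_pdivrMr ?Num.Theory.ltr0n //.
by rewrite -!natrM Num.Theory.ler_nat [X in _ <= X]mulnC.
Qed.
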